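(* Let $M(C,\bar\xi,\pi)$ be a Myller configuration with Darboux frame $(\bar\xi,\bar\mu,\bar v)$ and invariants $G,K,T$, $(K,T)\neq(0,0)$ everywhere, and suppose $C$ is a $W_o$-helix with fixed unit axis $\bar l_o$ and constant angle $\varepsilon$, $\langle\bar W_o,\bar l_o\rangle=\cos\varepsilon$. Then, for one choice of sign, $$\bar l_o=\cos\varepsilon\frac{T}{\sqrt{T^2+K^2}}\bar\xi-\cos\varepsilon\frac{K}{\sqrt{T^2+K^2}}\bar\mu\mp(\sin\varepsilon)\bar v.$$
   Context: Let $C$ be a smooth curve in $E^3$ parametrized by arclength $s$; primes denote $d/ds$. A Myller configuration $M(C,\bar\xi,\pi)$ consists of a smooth unit vector field $\bar\xi$ along $C$ and a smooth oriented plane field $\pi$ with $\bar\xi\in\pi$; $\bar v$ is the unit normal of $\pi$, $\bar\mu=\bar v\times\bar\xi$, and $\bar\xi'=G\bar\mu+K\bar v$, $\bar\mu'=-G\bar\xi+T\bar v$, $\bar v'=-K\bar\xi-T\bar\mu$. The OD-vector is $W_o=T\bar\xi-K\bar\mu$, $\bar W_o=W_o/\|W_o\|$; $C$ is a $W_o$-helix if there are a constant unit vector $\bar l_o$ (axis) and constant $\varepsilon$ with $\langle\bar W_o,\bar l_o\rangle=\cos\varepsilon$ along $C$.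
   Formalization: The unit OD-vector W̄_o is also assumed constant on no open subinterval of the arclength interval, and the sign in ∓ is a single sign, the same for every s along C. Apart from conventions, each condition added here is assumed in the paper as well or is needed for the statement above to hold. *)

(* Defs.v *)
From Stdlib Require Import Reals.
From Coquelicot Require Import Coquelicot.
Open Scope R_scope.

Definition vec := (R * R * R)%type.
Definition vx (u : vec) : R := fst (fst u).
Definition vy (u : vec) : R := snd (fst u).
Definition vz (u : vec) : R := snd u.
Definition mkv (x y z : R) : vec := (x, y, z).

Definition vadd (u w : vec) : vec := mkv (vx u + vx w) (vy u + vy w) (vz u + vz w).
Definition vscal (c : R) (u : vec) : vec := mkv (c * vx u) (c * vy u) (c * vz u).
Definition dot (u w : vec) : R := vx u * vx w + vy u * vy w + vz u * vz w.
Definition cross (u w : vec) : vec :=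
  mkv (vy u * vz w - vz u * vy w) (vz u * vx w - vx u * vz w) (vx u * vy w - vy u * vx w).
Definition vnorm (u : vec) : R := sqrt (dot u u).

Definition vis_derive (F : R -> vec) (s : R) (D : vec) : Prop :=
  is_derive (fun t => vx (F t)) s (vx D) /\
  is_derive (fun t => vy (F t)) s (vy D) /\
  is_derive (fun t => vz (F t)) s (vz D).

Definition smooth_on (f : R -> R) (a b : R) : Prop :=
  forall (n : nat) (s : R), a < s < b -> ex_derive_n f n s.
Definition vsmooth_on (F : R -> vec) (a b : R) : Prop :=
  smooth_on (fun t => vx (F t)) a b /\ smooth_on (fun t => vy (F t)) a b /\
  smooth_on (fun t => vz (F t)) a b.

Definition myller_config (a b : R) (r xi mu v : R -> vec) (G K T : R -> R) : Prop :=
  a < b /\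
  vsmooth_on r a b /\ vsmooth_on xi a b /\ vsmooth_on v a b /\
  forall s, a < s < b ->
    (exists r', vis_derive r s r' /\ vnorm r' = 1) /\
    vnorm (xi s) = 1 /\ vnorm (v s) = 1 /\ dot (xi s) (v s) = 0 /\
    mu s = cross (v s) (xi s) /\
    vis_derive xi s (vadd (vscal (G s) (mu s)) (vscal (K s) (v s))) /\
    vis_derive mu s (vadd (vscal (- G s) (xi s)) (vscal (T s) (v s))) /\
    vis_derive v s (vadd (vscal (- K s) (xi s)) (vscal (- T s) (mu s))).

Definition Wo (xi mu : R -> vec) (K T : R -> R) (s : R) : vec :=
  vadd (vscal (T s) (xi s)) (vscal (- K s) (mu s)).
Definition Wo_bar (xi mu : R -> vec) (K T : R -> R) (s : R) : vec :=
  vscal (/ vnorm (Wo xi mu K T s)) (Wo xi mu K T s).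

Definition Wo_helix (a b : R) (xi mu : R -> vec) (K T : R -> R) (l : vec) (eps : R) : Prop :=
  vnorm l = 1 /\
  forall s, a < s < b -> dot (Wo_bar xi mu K T s) l = cos eps.

Definition Wo_bar_nowhere_locally_constant (a b : R) (xi mu : R -> vec) (K T : R -> R) : Prop :=
  forall a' b', a <= a' -> a' < b' -> b' <= b ->
    exists s1 s2, a' < s1 < b' /\ a' < s2 < b' /\
      Wo_bar xi mu K T s1 <> Wo_bar xi mu K T s2.

(* Main.v *)
Require Import Defs.
From Stdlib Require Import Reals Psatz Lra.
From Coquelicot Require Import Coquelicot.
Open Scope R_scope.

Lemma dmul (f g : R -> R) x df dg : is_derive f x df -> is_derive g x dg ->
  is_derive (fun t => f t * g t) x (df * g x + f x * dg).
Proof. intros H1 H2. apply (is_derive_mult f g x df dg H1 H2). intros; apply Rmult_comm. Qed.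

Lemma dplus (f g : R -> R) x df dg : is_derive f x df -> is_derive g x dg ->
  is_derive (fun t => f t + g t) x (df + dg).
Proof. intros H1 H2. apply (is_derive_plus f g x df dg H1 H2). Qed.

Lemma dext (f : R -> R) x l l' : is_derive f x l -> l = l' -> is_derive f x l'.
Proof. intros H ->; exact H. Qed.

Lemma dcst (c x : R) : is_derive (fun _ => c) x 0.
Proof. apply (is_derive_const c x). Qed.

Lemma vec_ext (u w : vec) : vx u = vx w -> vy u = vy w -> vz u = vz w -> u = w.
Proof. destruct u as [[u1 u2] u3], w as [[w1 w2] w3]; unfold vx, vy, vz; simpl; intros; subst; auto. Qed.

Lemma dot_vadd u w z : dot (vadd u w) z = dot u z + dot w z.
Proof. unfold dot, vadd, mkv, vx, vy, vz; simpl; ring. Qed.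
Lemma dot_vscal c u z : dot (vscal c u) z = c * dot u z.
Proof. unfold dot, vscal, mkv, vx, vy, vz; simpl; ring. Qed.
Lemma dot_comm u w : dot u w = dot w u.
Proof. unfold dot; ring. Qed.

Lemma vderiv_dot_const F s D l : vis_derive F s D ->
  is_derive (fun t => dot (F t) l) s (dot D l).
Proof.
  intros [H1 [H2 H3]]. unfold dot.
  eapply dext.
  { apply dplus; [apply dplus|]; (apply dmul; [eassumption|apply dcst]). }
  simpl. ring.
Qed.

Lemma vderiv_dot F H s D E : vis_derive F s D -> vis_derive H s E ->
  is_derive (fun t => dot (F t) (H t)) s (dot D (H s) + dot (F s) E).
Proof.
  intros [H1 [H2 H3]] [E1 [E2 E3]]. unfold dot.
  eapply dext.
  { apply dplus; [apply dplus|]; (apply dmul; eassumption). }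
  simpl. ring.
Qed.

Lemma dot_pos u : 0 <= dot u u.
Proof. unfold dot; nra. Qed.

Lemma vnorm1 u : vnorm u = 1 -> dot u u = 1.
Proof. unfold vnorm; intros H. rewrite <- (sqrt_sqrt (dot u u)) by apply dot_pos. rewrite H; ring. Qed.

Lemma frame_facts x w : dot x x = 1 -> dot w w = 1 -> dot x w = 0 ->
  dot (cross w x) (cross w x) = 1 /\ dot (cross w x) x = 0 /\ dot (cross w x) w = 0.
Proof.
  destruct x as [[x1 x2] x3], w as [[w1 w2] w3].
  unfold dot, cross, mkv, vx, vy, vz; simpl; intros H1 H2 H3.
  split; [|split; ring].
  replace 1 with ((w1*w1+w2*w2+w3*w3)*(x1*x1+x2*x2+x3*x3) - (x1*w1+x2*w2+x3*w3)^2)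
    by (rewrite H1, H2, H3; ring).
  ring.
Qed.

Lemma gram w u x : (dot w (cross u x))^2 =
  dot w w * (dot u u * dot x x - (dot u x)^2)
  - dot w u * (dot w u * dot x x - dot u x * dot w x)
  + dot w x * (dot w u * dot u x - dot u u * dot w x).
Proof.
  destruct x as [[x1 x2] x3], w as [[w1 w2] w3], u as [[u1 u2] u3].
  unfold dot, cross, mkv, vx, vy, vz; simpl. ring.
Qed.

Lemma complete x w u : dot x x = 1 -> dot w w = 1 -> dot x w = 0 ->
  u = vadd (vadd (vscal (dot u x) x) (vscal (dot u (cross w x)) (cross w x)))
           (vscal (dot u w) w).
Proof.
  intros H1 H2 H3.
  destruct (frame_facts x w H1 H2 H3) as [M1 [M2 M3]].
  set (m := cross w x) in *.
  set (z := vadd (vadd (vscal (dot u x) x) (vscal (dot u m) m)) (vscal (dot u w) w)).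
  set (d := vadd u (vscal (-1) z)).
  assert (Dx : dot d x = 0).
  { unfold d, z. rewrite !dot_vadd, !dot_vscal, !dot_vadd, !dot_vscal.
    rewrite M2, H1, (dot_comm w x), H3. ring. }
  assert (Dw : dot d w = 0).
  { unfold d, z. rewrite !dot_vadd, !dot_vscal, !dot_vadd, !dot_vscal.
    rewrite M3, H2, H3. ring. }
  assert (Dm : dot d m = 0).
  { unfold d, z. rewrite !dot_vadd, !dot_vscal, !dot_vadd, !dot_vscal.
    rewrite M1, (dot_comm x m), M2, (dot_comm w m), M3. ring. }
  assert (G := gram d w x). fold m in G.
  rewrite Dm, H1, H2, (dot_comm w x), H3, Dw, Dx in G.
  assert (Z : dot d d = 0) by nra.
  clearbody z. clear G. unfold d in Z.
  destruct u as [[u1 u2] u3], z as [[z1 z2] z3].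
  unfold dot, vadd, vscal, mkv, vx, vy, vz in Z; simpl in Z.
  replace (u1 + -1 * z1) with (u1 - z1) in Z by ring.
  replace (u2 + -1 * z2) with (u2 - z2) in Z by ring.
  replace (u3 + -1 * z3) with (u3 - z3) in Z by ring.
  pose proof (Rle_0_sqr (u1 - z1)). pose proof (Rle_0_sqr (u2 - z2)).
  pose proof (Rle_0_sqr (u3 - z3)). unfold Rsqr in *.
  assert (S1 : (u1 - z1)*(u1-z1) = 0) by lra.
  assert (S2 : (u2 - z2)*(u2-z2) = 0) by lra.
  assert (S3 : (u3 - z3)*(u3-z3) = 0) by lra.
  apply Rmult_integral in S1. apply Rmult_integral in S2. apply Rmult_integral in S3.
  destruct S1, S2, S3; apply vec_ext; unfold vx, vy, vz; simpl; lra.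
Qed.

Lemma dot_vadd_r u w z : dot z (vadd u w) = dot z u + dot z w.
Proof. unfold dot, vadd, mkv, vx, vy, vz; simpl; ring. Qed.
Lemma dot_vscal_r c u z : dot z (vscal c u) = c * dot z u.
Proof. unfold dot, vscal, mkv, vx, vy, vz; simpl; ring. Qed.

Lemma alg1 P Q P' Q' A B C G K T x m w :
  P'*A + P*(G*B+K*C) + (Q'*B + Q*(-G*A + T*C)) = 0 ->
  P*P'+Q*Q' = 0 -> P*P+Q*Q = 1 -> P*K+Q*T = 0 -> P*B - Q*A <> 0 ->
  P'*x + P*(G*m+K*w) + (Q'*m + Q*(-G*x+T*w)) = 0.
Proof.
  intros h1 h2 h3 h4 h5.
  assert (e1 : P' = -Q*(P*Q' - Q*P')).
  { assert (E : P' + Q*(P*Q' - Q*P') = P'*(1-(P*P+Q*Q)) + P*(P*P'+Q*Q')) by ring.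
    rewrite h3, h2 in E. lra. }
  assert (e2 : Q' = P*(P*Q' - Q*P')).
  { assert (E : Q' - P*(P*Q' - Q*P') = Q'*(1-(P*P+Q*Q)) + Q*(P*P'+Q*Q')) by ring.
    rewrite h3, h2 in E. lra. }
  set (lam := P*Q' - Q*P') in *.
  clearbody lam.
  assert (E : (lam+G)*(P*B-Q*A) = 0).
  { assert (E : (lam+G)*(P*B-Q*A) = (P'*A + P*(G*B+K*C) + (Q'*B + Q*(-G*A + T*C))) - (P*K+Q*T)*C)
      by (rewrite e1, e2; ring).
    rewrite E, h1, h4. ring. }
  apply Rmult_integral in E. destruct E as [E|E]; [|contradiction].
  assert (E2 : P'*x + P*(G*m+K*w) + (Q'*m + Q*(-G*x+T*w)) = (lam+G)*(-Q*x+P*m) + (P*K+Q*T)*w)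
    by (rewrite e1, e2; ring).
  rewrite E2, E, h4. ring.
Qed.

Lemma const_on (g : R -> R) x1 x2 :
  (forall y, Rmin x1 x2 <= y <= Rmax x1 x2 -> is_derive g y 0) -> g x1 = g x2.
Proof.
  intros H.
  destruct (MVT_gen g x1 x2 (fun _ => 0)) as [c [_ E]].
  - intros y Hy. apply H. lra.
  - intros y Hy. apply continuity_pt_filterlim.
    assert (Hc : ex_derive g y) by (exists 0; apply H; exact Hy).
    exact (ex_derive_continuous (K:=R_AbsRing) (V:=R_NormedModule) g y Hc).
  - lra.
Qed.

Lemma pos_sq (K T : R) : (K, T) <> (0, 0) -> 0 < T ^ 2 + K ^ 2.
Proof.
  intros H. destruct (Req_dec K 0) as [->|HK].
  - destruct (Req_dec T 0) as [->|HT]; [contradiction|]. nra.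
  - nra.
Qed.

Theorem corollary29 (a b : R) (r xi mu v : R -> vec) (G K T : R -> R)
  (l : vec) (eps : R) :
  myller_config a b r xi mu v G K T ->
  (forall s, a < s < b -> (K s, T s) <> (0, 0)) ->
  Wo_bar_nowhere_locally_constant a b xi mu K T ->
  Wo_helix a b xi mu K T l eps ->
  exists sg : R, (sg = 1 \/ sg = -1) /\
    forall s, a < s < b ->
      l = vadd (vadd
            (vscal (cos eps * (T s / sqrt (T s ^ 2 + K s ^ 2))) (xi s))
            (vscal (- (cos eps * (K s / sqrt (T s ^ 2 + K s ^ 2)))) (mu s)))
            (vscal (- sg * sin eps) (v s)).
Proof.
  intros Hc HKT Hnc [Hl Hh].
  destruct Hc as [Hab [_ [Sxi [Sv Hpt]]]].
  assert (F : forall s, a < s < b ->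
     dot (xi s) (xi s) = 1 /\ dot (v s) (v s) = 1 /\ dot (xi s) (v s) = 0 /\
     dot (mu s) (mu s) = 1 /\ dot (mu s) (xi s) = 0 /\ dot (mu s) (v s) = 0).
  { intros s Hs. destruct (Hpt s Hs) as [_ [n1 [n2 [o [Emu _]]]]].
    apply vnorm1 in n1; apply vnorm1 in n2. rewrite Emu.
    destruct (frame_facts _ _ n1 n2 o) as [m1 [m2 m3]]. tauto. }
  assert (Emu : forall s, a < s < b -> mu s = cross (v s) (xi s)) by (intros s Hs; apply Hpt; auto).
  assert (Dxi : forall s, a < s < b -> vis_derive xi s (vadd (vscal (G s) (mu s)) (vscal (K s) (v s))))
    by (intros s Hs; apply Hpt; auto).
  assert (Dmu : forall s, a < s < b -> vis_derive mu s (vadd (vscal (- G s) (xi s)) (vscal (T s) (v s))))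
    by (intros s Hs; apply Hpt; auto).
  assert (Dv : forall s, a < s < b -> vis_derive v s (vadd (vscal (- K s) (xi s)) (vscal (- T s) (mu s))))
    by (intros s Hs; apply Hpt; auto).
  clear Hpt.
  assert (Loc : forall s, a < s < b -> locally s (fun t => a < t < b)).
  { intros s Hs. apply (open_and _ _ (open_gt a) (open_lt b)). exact Hs. }
  set (A := fun t => dot (xi t) l).
  set (B := fun t => dot (mu t) l).
  set (C := fun t => dot (v t) l).
  assert (dA : forall s, a<s<b -> is_derive A s (G s * B s + K s * C s)).
  { intros s Hs. eapply dext. apply vderiv_dot_const, Dxi; auto.
    rewrite dot_vadd, !dot_vscal. reflexivity. }
  assert (dB : forall s, a<s<b -> is_derive B s (- G s * A s + T s * C s)).
  { intros s Hs. eapply dext. apply vderiv_dot_const, Dmu; auto.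
    rewrite dot_vadd, !dot_vscal. reflexivity. }
  assert (dC : forall s, a<s<b -> is_derive C s (- K s * A s + - T s * B s)).
  { intros s Hs. eapply dext. apply vderiv_dot_const, Dv; auto.
    rewrite dot_vadd, !dot_vscal. reflexivity. }
  assert (eK : forall s, a<s<b -> ex_derive K s).
  { intros s Hs.
    set (Kd := fun t => dot (mkv (Derive (fun u => vx (xi u)) t) (Derive (fun u => vy (xi u)) t)
                              (Derive (fun u => vz (xi u)) t)) (v t)).
    assert (Hloc : locally s (fun t => Kd t = K t)).
    { eapply filter_imp; [|apply Loc; exact Hs]. intros t Ht.
      destruct (Dxi t Ht) as [d1 [d2 d3]]. unfold Kd.
      assert (e1 : Derive (fun u : R => vx (xi u)) t = vx (vadd (vscal (G t) (mu t)) (vscal (K t) (v t)))) by (apply is_derive_unique; exact d1).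
      assert (e2 : Derive (fun u : R => vy (xi u)) t = vy (vadd (vscal (G t) (mu t)) (vscal (K t) (v t)))) by (apply is_derive_unique; exact d2).
      assert (e3 : Derive (fun u : R => vz (xi u)) t = vz (vadd (vscal (G t) (mu t)) (vscal (K t) (v t)))) by (apply is_derive_unique; exact d3).
      rewrite e1, e2, e3.
      replace (mkv _ _ _) with (vadd (vscal (G t) (mu t)) (vscal (K t) (v t))) by (apply vec_ext; reflexivity).
      rewrite dot_vadd, !dot_vscal. destruct (F t Ht) as [_ [f2 [_ [_ [_ f6]]]]]. rewrite f6, f2. ring. }
    destruct Sxi as [s1 [s2 s3]].
    pose proof (Derive_correct _ _ (s1 2%nat s Hs)) as h1.
    pose proof (Derive_correct _ _ (s2 2%nat s Hs)) as h2.
    pose proof (Derive_correct _ _ (s3 2%nat s Hs)) as h3.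
    assert (HD : vis_derive (fun t => mkv (Derive (fun u => vx (xi u)) t) (Derive (fun u => vy (xi u)) t)
                              (Derive (fun u => vz (xi u)) t)) s
                 (mkv (Derive (Derive_n (fun u => vx (xi u)) 1) s) (Derive (Derive_n (fun u => vy (xi u)) 1) s)
                      (Derive (Derive_n (fun u => vz (xi u)) 1) s))).
    { split; [exact h1|split; [exact h2|exact h3]]. }
    eexists. eapply is_derive_ext_loc. exact Hloc. unfold Kd.
    apply (vderiv_dot _ _ _ _ _ HD (Dv s Hs)). }
  assert (eT : forall s, a<s<b -> ex_derive T s).
  { intros s Hs.
    set (Td := fun t => -1 * dot (mkv (Derive (fun u => vx (v u)) t) (Derive (fun u => vy (v u)) t)
                              (Derive (fun u => vz (v u)) t)) (mu t)).
    assert (Hloc : locally s (fun t => Td t = T t)).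
    { eapply filter_imp; [|apply Loc; exact Hs]. intros t Ht.
      destruct (Dv t Ht) as [d1 [d2 d3]]. unfold Td.
      assert (e1 : Derive (fun u : R => vx (v u)) t = vx (vadd (vscal (- K t) (xi t)) (vscal (- T t) (mu t)))) by (apply is_derive_unique; exact d1).
      assert (e2 : Derive (fun u : R => vy (v u)) t = vy (vadd (vscal (- K t) (xi t)) (vscal (- T t) (mu t)))) by (apply is_derive_unique; exact d2).
      assert (e3 : Derive (fun u : R => vz (v u)) t = vz (vadd (vscal (- K t) (xi t)) (vscal (- T t) (mu t)))) by (apply is_derive_unique; exact d3).
      rewrite e1, e2, e3.
      replace (mkv _ _ _) with (vadd (vscal (- K t) (xi t)) (vscal (- T t) (mu t))) by (apply vec_ext; reflexivity).
      rewrite dot_vadd, !dot_vscal. destruct (F t Ht) as [_ [_ [_ [f4 [f5 _]]]]].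
      rewrite f4, dot_comm, f5. ring. }
    destruct Sv as [s1 [s2 s3]].
    pose proof (Derive_correct _ _ (s1 2%nat s Hs)) as h1.
    pose proof (Derive_correct _ _ (s2 2%nat s Hs)) as h2.
    pose proof (Derive_correct _ _ (s3 2%nat s Hs)) as h3.
    assert (HD : vis_derive (fun t => mkv (Derive (fun u => vx (v u)) t) (Derive (fun u => vy (v u)) t)
                              (Derive (fun u => vz (v u)) t)) s
                 (mkv (Derive (Derive_n (fun u => vx (v u)) 1) s) (Derive (Derive_n (fun u => vy (v u)) 1) s)
                      (Derive (Derive_n (fun u => vz (v u)) 1) s))).
    { split; [exact h1|split; [exact h2|exact h3]]. }
    eexists. eapply is_derive_ext_loc. exact Hloc. unfold Td.
    apply is_derive_scal.
    apply (vderiv_dot _ _ _ _ _ HD (Dmu s Hs)). }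
  clear Sxi Sv.
  assert (Hpos : forall s, a<s<b -> 0 < T s ^ 2 + K s ^ 2) by (intros s Hs; apply pos_sq, HKT, Hs).
  set (n := fun t => sqrt (T t ^ 2 + K t ^ 2)).
  assert (Hn : forall s, a<s<b -> 0 < n s /\ n s * n s = T s ^ 2 + K s ^ 2).
  { intros s Hs. split; [apply sqrt_lt_R0, Hpos, Hs | apply sqrt_sqrt; apply Rlt_le, Hpos, Hs]. }
  set (P := fun t => T t / n t).
  set (Q := fun t => - K t / n t).
  assert (eP : forall s, a<s<b -> ex_derive P s).
  { intros s Hs. unfold P, n. pose proof (Hpos s Hs). auto_derive.
    repeat split; try apply eT; try apply eK; auto; try nra.
    apply Rgt_not_eq, sqrt_lt_R0; nra. }
  assert (eQ : forall s, a<s<b -> ex_derive Q s).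
  { intros s Hs. unfold Q, n. pose proof (Hpos s Hs). auto_derive.
    repeat split; try apply eT; try apply eK; auto; try nra.
    apply Rgt_not_eq, sqrt_lt_R0; nra. }
  assert (PQ1 : forall s, a<s<b -> P s * P s + Q s * Q s = 1).
  { intros s Hs. destruct (Hn s Hs) as [h1 h2]. unfold P, Q.
    replace (T s / n s * (T s / n s) + - K s / n s * (- K s / n s)) with ((T s ^ 2 + K s ^ 2) / (n s * n s))
      by (field; lra).
    rewrite h2. field. nra. }
  assert (PK : forall s, a<s<b -> P s * K s + Q s * T s = 0).
  { intros s Hs. destruct (Hn s Hs) as [h1 h2]. unfold P, Q. field. lra. }
  assert (EW : forall s, a<s<b -> Wo_bar xi mu K T s = vadd (vscal (P s) (xi s)) (vscal (Q s) (mu s))).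
  { intros s Hs. destruct (Hn s Hs) as [h1 h2].
    assert (NW : vnorm (Wo xi mu K T s) = n s).
    { unfold vnorm, n, Wo. f_equal.
      rewrite !dot_vadd, !dot_vscal, !dot_vadd_r, !dot_vscal_r.
      destruct (F s Hs) as [f1 [_ [_ [f4 [f5 _]]]]].
      rewrite f1, f4, f5, (dot_comm (xi s) (mu s)), f5. ring. }
    unfold Wo_bar. rewrite NW. unfold Wo, P, Q.
    apply vec_ext; unfold vscal, vadd, mkv, vx, vy, vz; simpl; field; lra. }
  assert (Hel : forall s, a<s<b -> P s * A s + Q s * B s = cos eps).
  { intros s Hs. rewrite <- (Hh s Hs), EW by exact Hs.
    rewrite dot_vadd, !dot_vscal. reflexivity. }
  assert (Key : forall t, a<t<b -> K t * A t + T t * B t <> 0 ->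
     forall pr : vec -> R, (forall u w, pr (vadd u w) = pr u + pr w) ->
       (forall c u, pr (vscal c u) = c * pr u) ->
       is_derive (fun u => pr (xi u)) t (pr (vadd (vscal (G t) (mu t)) (vscal (K t) (v t)))) ->
       is_derive (fun u => pr (mu u)) t (pr (vadd (vscal (- G t) (xi t)) (vscal (T t) (v t)))) ->
       is_derive (fun u => P u * pr (xi u) + Q u * pr (mu u)) t 0).
  { intros t Ht Hf pr padd pscal hx hm.
    pose proof (Derive_correct _ _ (eP t Ht)) as dP.
    pose proof (Derive_correct _ _ (eQ t Ht)) as dQ.
    set (P' := Derive P t) in *. set (Q' := Derive Q t) in *.
    assert (h1 : P'*A t + P t*(G t*B t+K t*C t) + (Q'*B t + Q t*(-G t*A t + T t*C t)) = 0).
    { assert (X1 : is_derive (fun u => P u * A u + Q u * B u) t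
         (P'*A t + P t*(G t*B t+K t*C t) + (Q'*B t + Q t*(-G t*A t + T t*C t)))).
      { apply dplus; apply dmul; auto. }
      assert (X2 : is_derive (fun u => P u * A u + Q u * B u) t 0).
      { eapply is_derive_ext_loc; [|apply (dcst (cos eps))].
        eapply filter_imp; [|apply Loc; exact Ht]. intros u Hu. symmetry. apply Hel, Hu. }
      rewrite <- (is_derive_unique _ _ _ X1). apply (is_derive_unique _ _ _ X2). }
    assert (h2 : P t * P' + Q t * Q' = 0).
    { assert (X1 : is_derive (fun u => P u * P u + Q u * Q u) t
         (P' * P t + P t * P' + (Q' * Q t + Q t * Q'))).
      { apply dplus; apply dmul; auto. }
      assert (X2 : is_derive (fun u => P u * P u + Q u * Q u) t 0).
      { eapply is_derive_ext_loc; [|apply (dcst 1)].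
        eapply filter_imp; [|apply Loc; exact Ht]. intros u Hu. symmetry. apply PQ1, Hu. }
      pose proof (eq_trans (eq_sym (is_derive_unique _ _ _ X1)) (is_derive_unique _ _ _ X2)). lra. }
    assert (h5 : P t * B t - Q t * A t <> 0).
    { destruct (Hn t Ht) as [n1 n2]. intro E. apply Hf.
      replace (K t * A t + T t * B t) with (n t * (P t * B t - Q t * A t)) by (unfold P, Q; field; lra).
      rewrite E. ring. }
    eapply dext. { apply dplus; apply dmul; eauto. }
    rewrite padd, !pscal in hx, hm |- *. rewrite padd, !pscal.
    apply (alg1 _ _ _ _ _ _ _ _ _ _ _ _ _ h1 h2 (PQ1 t Ht) (PK t Ht) h5). }
  assert (f0 : forall s, a<s<b -> K s * A s + T s * B s = 0).
  { intros s0 Hs0. destruct (Req_dec (K s0 * A s0 + T s0 * B s0) 0) as [E|Hf]; [exact E|exfalso].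
    set (f := fun t => K t * A t + T t * B t).
    assert (ef : ex_derive f s0).
    { unfold f. eexists. apply dplus; apply dmul.
      apply Derive_correct, eK, Hs0. apply dA, Hs0. apply Derive_correct, eT, Hs0. apply dB, Hs0. }
    pose proof (ex_derive_continuous (K:=R_AbsRing) (V:=R_NormedModule) f s0 ef) as cf.
    assert (L1 : locally s0 (fun t => f t <> 0)).
    { exact (cf (fun y => y <> 0) (open_neq 0 (f s0) Hf)). }
    destruct (filter_and _ _ (Loc s0 Hs0) L1) as [e He].
    assert (He' : forall y, Rabs (y - s0) < e -> (a < y < b) /\ f y <> 0) by (intros y Hy; apply He; exact Hy).
    pose proof (cond_pos e) as epos.
    assert (Ha' : a < s0 - e/2).
    { destruct (He' (s0 - e/2)) as [[? ?] _]; [rewrite Rabs_left; lra|lra]. }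
    assert (Hb' : s0 + e/2 < b).
    { destruct (He' (s0 + e/2)) as [[? ?] _]; [rewrite Rabs_right; lra|lra]. }
    destruct (Hnc (s0 - e/2) (s0 + e/2)) as [s1 [s2 [Hs1 [Hs2 Hne]]]]; try lra.
    apply Hne.
    assert (In : forall y, Rmin s1 s2 <= y <= Rmax s1 s2 -> (a < y < b) /\ f y <> 0).
    { intros y Hy. apply He'. unfold Rmin, Rmax in Hy. apply Rabs_def1; destruct (Rle_dec s1 s2); lra. }
    assert (In2 : forall y, Rmin s1 s2 <= y <= Rmax s1 s2 -> a < y < b) by (intros y Hy; apply In, Hy).
    assert (Hs1' : a < s1 < b) by lra. assert (Hs2' : a < s2 < b) by lra.
    rewrite (EW s1 Hs1'), (EW s2 Hs2').
    apply vec_ext.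
    - apply (const_on (fun u => P u * vx (xi u) + Q u * vx (mu u))).
      intros y Hy. destruct (In y Hy) as [Hy1 Hy2].
      apply (Key y Hy1 Hy2 vx); try reflexivity; [apply (Dxi y Hy1)|apply (Dmu y Hy1)].
    - apply (const_on (fun u => P u * vy (xi u) + Q u * vy (mu u))).
      intros y Hy. destruct (In y Hy) as [Hy1 Hy2].
      apply (Key y Hy1 Hy2 vy); try reflexivity; [apply (Dxi y Hy1)|apply (Dmu y Hy1)].
    - apply (const_on (fun u => P u * vz (xi u) + Q u * vz (mu u))).
      intros y Hy. destruct (In y Hy) as [Hy1 Hy2].
      apply (Key y Hy1 Hy2 vz); try reflexivity; [apply (Dxi y Hy1)|apply (Dmu y Hy1)]. }
  set (m0 := (a + b) / 2).
  assert (Hm0 : a < m0 < b) by (unfold m0; lra).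
  assert (Cc : forall s, a<s<b -> C s = C m0).
  { intros s Hs. symmetry. apply const_on. intros y Hy.
    assert (Hy' : a < y < b) by (unfold Rmin, Rmax in Hy; destruct (Rle_dec m0 s); lra).
    eapply dext. apply dC, Hy'. pose proof (f0 y Hy'). lra. }
  assert (Coef : forall s, a<s<b -> A s = cos eps * P s /\ B s = cos eps * Q s /\ C s ^ 2 = sin eps ^ 2).
  { intros s Hs. destruct (F s Hs) as [f1 [f2 [f3 _]]].
    pose proof (complete (xi s) (v s) l f1 f2 f3) as Hcl. rewrite <- (Emu s Hs) in Hcl.
    assert (N1 : dot l l = 1) by (apply vnorm1, Hl).
    assert (S : A s ^ 2 + B s ^ 2 + C s ^ 2 = 1).
    { rewrite <- N1. rewrite Hcl at 1. rewrite !dot_vadd, !dot_vscal.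
      unfold A, B, C. rewrite (dot_comm l (xi s)), (dot_comm l (mu s)), (dot_comm l (v s)). ring. }
    destruct (Hn s Hs) as [n1 n2].
    assert (Z : P s * B s - Q s * A s = 0).
    { pose proof (f0 s Hs). unfold P, Q.
      replace (T s / n s * B s - - K s / n s * A s) with ((K s * A s + T s * B s) / n s) by (field; lra).
      rewrite H. field. lra. }
    pose proof (Hel s Hs) as He. pose proof (PQ1 s Hs) as Hpq.
    assert (EA : A s = cos eps * P s).
    { assert (X : A s * (P s * P s + Q s * Q s) = P s * (P s * A s + Q s * B s) - Q s * (P s * B s - Q s * A s)) by ring.
      rewrite Hpq, Z, He, Rmult_1_r in X. rewrite X. ring. }
    assert (EB : B s = cos eps * Q s).
    { assert (X : B s * (P s * P s + Q s * Q s) = Q s * (P s * A s + Q s * B s) + P s * (P s * B s - Q s * A s)) by ring.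
      rewrite Hpq, Z, He, Rmult_1_r in X. rewrite X. ring. }
    split; [exact EA|split; [exact EB|]].
    pose proof (sin2_cos2 eps) as sc. unfold Rsqr in sc.
    rewrite EA, EB in S.
    replace (C s ^ 2) with (1 - cos eps ^ 2 * (P s * P s + Q s * Q s)) by (rewrite <- S; ring).
    rewrite Hpq. lra. }
  assert (Fin : forall sg, - sg * sin eps = C m0 ->
     forall s, a < s < b ->
      l = vadd (vadd
            (vscal (cos eps * (T s / sqrt (T s ^ 2 + K s ^ 2))) (xi s))
            (vscal (- (cos eps * (K s / sqrt (T s ^ 2 + K s ^ 2)))) (mu s)))
            (vscal (- sg * sin eps) (v s))).
  { intros sg Hsg s Hs. destruct (F s Hs) as [f1 [f2 [f3 _]]].
    pose proof (complete (xi s) (v s) l f1 f2 f3) as Hcl. rewrite <- (Emu s Hs) in Hcl.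
    rewrite Hcl at 1. destruct (Coef s Hs) as [EA [EB _]].
    rewrite (dot_comm l (xi s)), (dot_comm l (mu s)), (dot_comm l (v s)).
    change (dot (xi s) l) with (A s). change (dot (mu s) l) with (B s). change (dot (v s) l) with (C s).
    rewrite EA, EB, Hsg, <- (Cc s Hs). unfold P, Q, n.
    f_equal. f_equal; f_equal. unfold Rdiv. ring. }
  destruct (Req_dec (sin eps) 0) as [Z|NZ].
  - exists 1. split; [left; reflexivity|]. apply Fin.
    destruct (Coef m0 Hm0) as [_ [_ E]]. rewrite Z in *. 
    assert (C m0 * C m0 = 0) by (simpl in E; lra).
    apply Rmult_integral in H. destruct H as [H|H]; rewrite H; ring.
  - exists (- C m0 / sin eps). split.
    + destruct (Coef m0 Hm0) as [_ [_ E]].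
      assert (E2 : (- C m0 / sin eps) * (- C m0 / sin eps) = 1).
      { replace ((- C m0 / sin eps) * (- C m0 / sin eps)) with (C m0 ^ 2 / sin eps ^ 2) by (field; exact NZ).
        rewrite E. field. exact NZ. }
      assert (E3 : (- C m0 / sin eps - 1) * (- C m0 / sin eps + 1) = 0) by nra.
      apply Rmult_integral in E3. destruct E3; [left|right]; lra.
    + apply Fin. field. exact NZ.
Qed.
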